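(* Let $G$ be a factor-critical equimatchable graph. If $G$ is edge-stable, then $\mathrm{diam}(G)\le 2$.
   Context: All graphs are finite and simple. A graph is equimatchable if all its maximal matchings have the same cardinality; an equimatchable graph $G$ is edge-stable if $G\setminus e$ (delete edge $e$, keep vertices) is equimatchable for every $e\in E(G)$. A graph $G$ is factor-critical if $G-v$ has a perfect matching for every $v\in V(G)$. $\mathrm{diam}(G)=\max\{d(u,v):u,v\in V(G)\}$, where $d(u,v)$ is the length of a shortest $u$–$v$ path. *)

(* Defs.v *)
From mathcomp Require Import all_boot.
Set Implicit Arguments. Unset Strict Implicit. Unset Printing Implicit Defensive.

Definition simple_graph (T : finType) (g : rel T) : Prop :=
  symmetric g /\ irreflexive g.

Definition edges (T : finType) (g : rel T) : {set {set T}} :=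
  [set e : {set T} | [exists x, exists y, g x y && (e == [set x; y])]].

Definition matching (T : finType) (g : rel T) (M : {set {set T}}) : Prop :=
  M \subset edges g /\
  (forall e f, e \in M -> f \in M -> e != f -> [disjoint e & f]).

Definition maximal_matching (T : finType) (g : rel T) (M : {set {set T}}) : Prop :=
  matching g M /\
  (forall M' : {set {set T}}, matching g M' -> M \subset M' -> M' = M).

Definition equimatchable (T : finType) (g : rel T) : Prop :=
  forall M1 M2, maximal_matching g M1 -> maximal_matching g M2 -> #|M1| = #|M2|.

Definition del_edge (T : finType) (g : rel T) (u v : T) : rel T :=
  fun x y => g x y && ~~ (((x == u) && (y == v)) || ((x == v) && (y == u))).

Definition edge_stable (T : finType) (g : rel T) : Prop :=
  equimatchable g /\
  forall u v, g u v -> equimatchable (del_edge g u v).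

Definition del_vertex (T : finType) (g : rel T) (w : T) : rel T :=
  fun x y => [&& g x y, x != w & y != w].

Definition perfect_matching_except (T : finType) (g : rel T) (w : T)
  (M : {set {set T}}) : Prop :=
  matching (del_vertex g w) M /\
  (forall x, x != w -> exists2 e, e \in M & x \in e).

Definition factor_critical (T : finType) (g : rel T) : Prop :=
  forall w, exists M, perfect_matching_except g w M.

Definition dist_le (T : finType) (g : rel T) (k : nat) (u v : T) : Prop :=
  exists p : seq T, [/\ path g u p, last u p = v & size p <= k].

Definition diam_le (T : finType) (g : rel T) (k : nat) : Prop :=
  forall u v, dist_le g k u v.

(* Main.v *)
Require Import Defs.
From mathcomp Require Import all_boot.
Set Implicit Arguments. Unset Strict Implicit. Unset Printing Implicit Defensive.

Section Aux.
Variable T : finType.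

Lemma edgesP (g : rel T) f : f \in edges g -> exists x y, g x y /\ f = [set x; y].
Proof. rewrite inE => /existsP [x /existsP [y /andP [gxy /eqP ->]]]. by exists x, y. Qed.

Lemma edges_mono (g1 g2 : rel T) : (forall x y, g1 x y -> g2 x y) -> edges g1 \subset edges g2.
Proof.
move=> H; apply/subsetP => f; rewrite !inE => /existsP [x /existsP [y /andP [gxy ef]]].
apply/existsP; exists x; apply/existsP; exists y; by rewrite H.
Qed.

Lemma matching_mono (g1 g2 : rel T) M : (forall x y, g1 x y -> g2 x y) ->
  matching g1 M -> matching g2 M.
Proof. move=> H [sub dis]; split => //; exact: subset_trans sub (edges_mono H). Qed.

Lemma maximal_cover (g : rel T) M (S : {set T}) : matching g M ->
  (forall z, z \notin S -> exists2 e, e \in M & z \in e) ->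
  (forall x y, x \in S -> y \in S -> ~~ g x y) -> maximal_matching g M.
Proof.
move=> mM cov nS; split => // M' [sub' dis'] sMM'.
apply/eqP; rewrite eqEsubset sMM' andbT; apply/subsetP => f fM'.
case fM: (f \in M) => //.
have [x [y [gxy ef]]] := edgesP (subsetP sub' f fM').
have inS : forall z, z \in f -> z \in S.
  move=> z zf; apply/negPn/negP => /cov [e eM ze].
  have eM' := subsetP sMM' e eM.
  have neq : e != f by apply/eqP => eef; rewrite eef fM in eM.
  by rewrite (disjointFr (dis' e f eM' fM' neq) ze) in zf.
have := nS x y (inS x _) (inS y _).
by rewrite gxy ef !inE !eqxx ?orbT => /(_ isT isT).
Qed.
End Aux.

Theorem corollary3p3 (T : finType) (g : rel T) :
  simple_graph g -> factor_critical g -> equimatchable g ->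
  edge_stable g -> diam_le g 2.
Proof.
move=> [gsym girr] fc _ [eqg eqh] u v.
case uv: (u == v).
  by move/eqP: uv => <-; exists [::].
case guv: (g u v).
  by exists [:: v]; rewrite /= guv.
case ex: [exists w, g u w && g w v].
  by move/existsP: ex => [w /andP [h1 h2]]; exists [:: w; v]; rewrite /= h1 h2.
exfalso.
have [Mu [mMu covu]] := fc u.
have [Mv [mMv covv]] := fc v.
have [e eMu ve] := covu v (negbT (etrans (eq_sym v u) uv)).
have [a [b [gab ee]]] := edgesP (subsetP mMu.1 e eMu).
move: gab => /and3P [gab au bu].
have [w [gvw wu ew]] : exists w, [/\ g v w, w != u & e = [set v; w]].
  move: ve; rewrite ee !inE => /orP [] /eqP ->; [exists b | exists a]; split => //.
    by rewrite gsym.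
  by rewrite setUC.
have guw : g u w = false.
  apply/negbTE/negP => guw; move/negbT: ex => /existsPn /(_ w).
  by rewrite guw gsym gvw.
pose h := del_edge g v w.
have hle : forall x y, h x y -> g x y by move=> x y /andP [].
have dvg : forall z x y, del_vertex g z x y -> g x y by move=> z x y /and3P [].
have maxu : maximal_matching g Mu.
  apply: (maximal_cover (S := [set u])).
  - exact: matching_mono (dvg u) mMu.
  - by move=> z; rewrite inE => /covu.
  - by move=> x y; rewrite !inE => /eqP -> /eqP ->; rewrite girr.
have maxv : maximal_matching g Mv.
  apply: (maximal_cover (S := [set v])).
  - exact: matching_mono (dvg v) mMv.
  - by move=> z; rewrite inE => /covv.
  - by move=> x y; rewrite !inE => /eqP -> /eqP ->; rewrite girr.
have cuv := eqg _ _ maxu maxv.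
have maxvh : maximal_matching h Mv.
  apply: (maximal_cover (S := [set v])).
  - apply: matching_mono mMv => x y /and3P [gxy xv yv].
    by rewrite /h /del_edge gxy (negbTE xv) (negbTE yv) /= andbF.
  - by move=> z; rewrite inE => /covv.
  - by move=> x y; rewrite !inE => /eqP -> /eqP ->; apply/negP => /hle; rewrite girr.
have maxe : maximal_matching h (Mu :\ e).
  apply: (maximal_cover (S := [set u; v; w])).
  - split.
      apply/subsetP => f; rewrite !inE => /andP [fe fMu].
      have [x [y [/and3P [gxy _ _] ef]]] := edgesP (subsetP mMu.1 f fMu).
      apply/existsP; exists x; apply/existsP; exists y.
      rewrite ef eqxx andbT /h /del_edge gxy /=.
      apply/negP => /orP [] /andP [/eqP ex' /eqP ey]; move: fe; rewrite ef ew ex' ey ?eqxx //.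
      by rewrite setUC eqxx.
    move=> e1 e2; rewrite !inE => /andP [_ e1M] /andP [_ e2M]; exact: mMu.2.
  - move=> z zS.
    have zu : z != u by apply: contraNneq zS => ->; rewrite !inE eqxx.
    have zv : z != v by apply: contraNneq zS => ->; rewrite !inE eqxx ?orbT.
    have zw : z != w by apply: contraNneq zS => ->; rewrite !inE eqxx ?orbT.
    have [e' e'M ze'] := covu z zu.
    exists e' => //; rewrite !inE e'M andbT.
    apply/eqP => e'e; move: ze'; rewrite e'e ew !inE.
    by rewrite (negbTE zv) (negbTE zw).
  - have S3 : forall x, x \in [set u; v; w] -> [\/ x = u, x = v | x = w].
      move=> x; rewrite !inE.
      case: (x =P u) => [->|_]; first by constructor.
      case: (x =P v) => [->|_]; first by constructor.
      by case: (x =P w) => [->|_]; [constructor | rewrite ?orbF].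
    move=> x y /S3 [] -> /S3 [] ->;
      apply/negP => hxy; move: (hle _ _ hxy); rewrite ?girr ?guv ?guw //;
      rewrite ?(gsym v u) ?(gsym w u) ?guv ?guw //.
    1,2: move=> _; move: hxy; rewrite /h /del_edge !eqxx /= ?orbT ?andbF //.
have c2 := eqh v w gvw _ _ maxe maxvh.
move: (cardsD1 e Mu); rewrite eMu.
move: cuv c2 => -> ->.
by move=> /eqP; rewrite -[X in X == _]add0n eqn_add2r.
Qed.
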